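(* Let $f \in \mathbb{C}[x_1,\ldots,x_n]$ be a homogeneous polynomial of degree $d$ whose dimension of partial derivatives is exactly $w$, and let $A_1,\ldots,A_n \in \mathbb{C}^{w\times w}$ be the multiplication tables of the apolar ideal $f^{\perp} \subseteq \mathbb{C}[t_1,\ldots,t_n]$ of $f(t_1,\ldots,t_n)$. Define $$G(\mathbf{x},\mathbf{t}) := \prod_{i=1}^{n}\left(\sum_{k=0}^{d} \frac{1}{k!} t_i^k x_i^k\right).$$ Then there exists a vector $\mathbf{v}\in\mathbb{C}^w$ such that $$\sum_{j\in[w]} v_j \cdot G(x_1,\ldots,x_n,A_1,\ldots,A_n)[1,j] = f(\mathbf{x}),$$ where $G(\mathbf{x},A_1,\ldots,A_n)$ is the $w\times w$ matrix with entries in $\mathbb{C}[\mathbf{x}]$ obtained by substituting $A_i$ for $t_i$ (and the identity matrix for $1$), and $[1,j]$ denotes its $(1,j)$ entry.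
   Context: The dimension of partial derivatives of $f$ is $\dim_{\mathbb{C}}\mathrm{span}_{\mathbb{C}}\{\partial_{\mathbf{e}} f : \mathbf{e}\in\mathbb{N}^n\}$, where $\partial_{\mathbf{e}}$ is the partial derivative with respect to the monomial $\mathbf{x}^{\mathbf{e}}$ (with $\mathbf{e}=\mathbf{0}$ giving $f$). For $g = \sum_{\mathbf{e}} g_{\mathbf{e}}\mathbf{t}^{\mathbf{e}}$, the derivative operator $D_g := \sum_{\mathbf{e}} g_{\mathbf{e}} \partial_{\mathbf{e}}$. The apolar ideal $f^{\perp}\subseteq\mathbb{C}[\mathbf{t}]$ is the ideal generated by $\{h\in\mathbb{C}[\mathbf{t}] : D_h f(\mathbf{t}) \equiv 0\}$. Fix the degree-wise lexicographic monomial order on $\mathbb{C}[t_1,\ldots,t_n]$ with $t_1\prec t_2\prec\cdots\prec t_n$. The normal set of $f^{\perp}$ is the set of monomials that are not the leading monomial of any element of $f^{\perp}$; for $g\in\mathbb{C}[\mathbf{t}]$, $[g]$ denotes the unique polynomial supported on the normal set with $g-[g]\in f^{\perp}$. The normal set is finite with exactly $w$ elements; list them as $1 = m_1\prec m_2\prec\cdots\prec m_w$. The multiplication tables are the $w\times w$ matrices $A_\ell$, $\ell\in[n]$, with $A_\ell(i,j) :=$ the coefficient of $m_j$ in $[t_\ell\cdot m_i]$; these matrices pairwise commute. *)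

(* Defs.v *)
From HB Require Import structures.
From mathcomp Require Import all_boot all_order all_algebra.
From mathcomp Require Import Rstruct.
From mathcomp.real_closed Require Import complex.
From mathcomp Require Import mpoly.

Set Implicit Arguments.
Unset Strict Implicit.
Unset Printing Implicit Defensive.

Import GRing.Theory.
Local Open Scope ring_scope.

Notation CC := ((Rdefinitions.R)[i]).

Section Apolar.
Variable n : nat.
Implicit Types (f g h p q : {mpoly CC[n]}) (m e : 'X_{1..n}).

Definition pderiv_mon e f : {mpoly CC[n]} := mderivm e f.

Definition Dop g f : {mpoly CC[n]} :=
  \sum_(m <- msupp g) g@_m *: pderiv_mon m f.

Definition in_span (S : {mpoly CC[n]} -> Prop) p : Prop :=
  exists r : seq (CC * {mpoly CC[n]}),
    (forall x, x \in r -> S x.2) /\ p = \sum_(x <- r) x.1 *: x.2.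

Definition span_dim (S : {mpoly CC[n]} -> Prop) (w : nat) : Prop :=
  exists b : 'I_w -> {mpoly CC[n]},
    [/\ forall i, in_span S (b i),
        forall c : 'I_w -> CC, \sum_(i < w) c i *: b i = 0 -> forall i, c i = 0
      & forall p, S p -> in_span (fun q => exists i, q = b i) p].

Definition pd_dim f (w : nat) : Prop :=
  span_dim (fun q => exists e, q = pderiv_mon e f) w.

Definition in_ideal (S : {mpoly CC[n]} -> Prop) h : Prop :=
  exists r : seq ({mpoly CC[n]} * {mpoly CC[n]}),
    (forall x, x \in r -> S x.2) /\ h = \sum_(x <- r) x.1 * x.2.

Definition apolar f h : Prop := in_ideal (fun g => Dop g f = 0) h.

(* degree-wise lexicographic order on monomials with t_1 < t_2 < ... < t_n
   (variable t_k is index k-1 : 'I_n) : strict comparison m1 < m2 *)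
Definition deglex_lt (m1 m2 : 'X_{1..n}) : bool :=
  (mdeg m1 < mdeg m2)%N ||
  ((mdeg m1 == mdeg m2) &&
   [exists i : 'I_n, (m1 i < m2 i)%N &&
                      [forall j : 'I_n, (i < j)%N ==> (m1 j == m2 j)]]).

Definition is_lead_mon g m : Prop :=
  g@_m != 0 /\ forall m', g@_m' != 0 -> m' != m -> deglex_lt m' m.

Definition normal_set f m : Prop :=
  ~ exists g, apolar f g /\ is_lead_mon g m.

Definition is_normal_form f g p : Prop :=
  (forall m, p@_m != 0 -> normal_set f m) /\ apolar f (g - p).

Definition Gmat (w d : nat) (A : 'I_n -> 'M[CC]_w) : 'M[{mpoly CC[n]}]_w :=
  \prod_(i < n) \sum_(k < d.+1)
     ((k`!%:R)^-1 *: 'X_i ^+ k) *: map_mx (fun c : CC => c%:MP_[n]) (A i ^+ k).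

End Apolar.

(* Main.v *)
Require Import Defs.
From HB Require Import structures.
From mathcomp Require Import all_boot all_order all_algebra.
From mathcomp Require Import Rstruct.
From mathcomp.real_closed Require Import complex.
From mathcomp Require Import mpoly.
From mathcomp.multinomials Require Import ssrcomplements.

Import GRing.Theory.
Local Open Scope ring_scope.

Section DopTh.
Variable n : nat.
Implicit Types (f g h p q a : {mpoly CC[n]}) (m : 'X_{1..n}).

Lemma DopE K g f : (msize g <= K)%N ->
  Dop g f = \sum_(m : 'X_{1..n < K}) g@_m *: mderivm m f.
Proof.
move=> le_gK; set I : subFinType _ := 'X_{1..n < K}.
rewrite /Dop /pderiv_mon (big_mksub I) ?msupp_uniq //=; first last.
  by move=> x /msize_mdeg_lt /leq_trans; apply.
rewrite big_rmcond //= => j /memN_msupp_eq0 ->.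
by rewrite scale0r.
Qed.

Lemma Dop_lin f (c : CC) g1 g2 : Dop (c *: g1 + g2) f = c *: Dop g1 f + Dop g2 f.
Proof.
set K := maxn (msize (c *: g1 + g2)) (maxn (msize g1) (msize g2)).
have h1 : (msize (c *: g1 + g2) <= K)%N by rewrite leq_maxl.
have h2 : (msize g1 <= K)%N by rewrite /K (leq_trans _ (leq_maxr _ _)) ?leq_maxl.
have h3 : (msize g2 <= K)%N by rewrite /K (leq_trans _ (leq_maxr _ _)) ?leq_maxr.
rewrite (DopE _ _ _ h1) (DopE _ _ _ h2) (DopE _ _ _ h3).
rewrite scaler_sumr -big_split /=; apply: eq_bigr => m _.
by rewrite mcoeffD mcoeffZ scalerDl scalerA.
Qed.


Lemma Dop_linr g (c : CC) f1 f2 : Dop g (c *: f1 + f2) = c *: Dop g f1 + Dop g f2.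
Proof.
rewrite /Dop /pderiv_mon scaler_sumr -big_split /=; apply: eq_bigr => m _.
by rewrite linearP /= scalerDr !scalerA mulrC.
Qed.

Lemma Dop0r g : Dop g 0 = 0.
Proof. by rewrite /Dop big1 // => m _; rewrite /pderiv_mon linear0 scaler0. Qed.
Lemma DopZr g c f : Dop g (c *: f) = c *: Dop g f.
Proof. by have := Dop_linr g c f 0; rewrite !addr0 Dop0r addr0. Qed.
Lemma DopDr g f1 f2 : Dop g (f1 + f2) = Dop g f1 + Dop g f2.
Proof. by have := Dop_linr g 1 f1 f2; rewrite !scale1r. Qed.
Lemma Dop_sumr g (I : Type) (r : seq I) (F : I -> {mpoly CC[n]}) :
  Dop g (\sum_(i <- r) F i) = \sum_(i <- r) Dop g (F i).
Proof.
elim: r => [|x r IH]; first by rewrite !big_nil Dop0r.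
by rewrite !big_cons DopDr IH.
Qed.

Lemma Dop0 f : Dop 0 f = 0.
Proof. by rewrite /Dop msupp0 big_nil. Qed.
Lemma DopZ f c g : Dop (c *: g) f = c *: Dop g f.
Proof. by have := Dop_lin f c g 0; rewrite !addr0 Dop0 addr0. Qed.
Lemma DopD f g1 g2 : Dop (g1 + g2) f = Dop g1 f + Dop g2 f.
Proof. by have := Dop_lin f 1 g1 g2; rewrite !scale1r. Qed.
Lemma DopB f g1 g2 : Dop (g1 - g2) f = Dop g1 f - Dop g2 f.
Proof. have := Dop_lin f (-1) g2 g1; rewrite !scaleN1r addrC [RHS]addrC. by []. Qed.
Lemma Dop_sum f (I : Type) (r : seq I) (F : I -> {mpoly CC[n]}) :
  Dop (\sum_(i <- r) F i) f = \sum_(i <- r) Dop (F i) f.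
Proof.
elim: r => [|x r IH]; first by rewrite !big_nil Dop0.
by rewrite !big_cons DopD IH.
Qed.

Lemma DopX m f : Dop 'X_[m] f = mderivm m f.
Proof. by rewrite /Dop msuppX big_seq1 mcoeffX eqxx scale1r. Qed.

Lemma DopM a g f : Dop (a * g) f = Dop a (Dop g f).
Proof.
rewrite mpolyME Dop_sum big_allpairs {3}/Dop /pderiv_mon.
apply: eq_bigr => m1 _.
rewrite /Dop /pderiv_mon linear_sum scaler_sumr /=; apply: eq_bigr => m2 _.
rewrite -/(Dop _ f) DopZ DopX linearZ /= scalerA -mderivmDm addmC.
done.
Qed.


Lemma apolar_Dop f h : apolar f h -> Dop h f = 0.
Proof.
case=> r [rS ->]; rewrite Dop_sum big_seq big1 // => x /rS hx.
by rewrite DopM hx Dop0r.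
Qed.

Lemma DopC c f : Dop c%:MP f = c *: f.
Proof.
have -> : c%:MP = c *: 'X_[0%MM] :> {mpoly CC[n]}.
  by apply/mpolyP => m; rewrite mcoeffC mcoeffZ mcoeffX eq_sym.
by rewrite DopZ DopX mderivm0m.
Qed.

Lemma deglex_irr m : ~~ deglex_lt m m.
Proof.
rewrite /deglex_lt ltnn /=; apply/negP => /andP [_ /existsP [i /andP [hi _]]].
by rewrite ltnn in hi.
Qed.

Lemma deglex_0 m : ~~ deglex_lt m 0%MM.
Proof.
rewrite /deglex_lt mdeg0 ltn0 /=; apply/negP => /andP [_ /existsP [i /andP [hi _]]].
by rewrite mnm0E ltn0 in hi.
Qed.

End DopTh.
Arguments DopE {n}.
Arguments Dop_lin {n}.
Arguments Dop_linr {n}.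
Arguments Dop0r {n}.
Arguments DopZr {n}.
Arguments DopDr {n}.
Arguments Dop_sumr {n}.
Arguments Dop0 {n}.
Arguments DopZ {n}.
Arguments DopD {n}.
Arguments DopB {n}.
Arguments Dop_sum {n}.
Arguments DopX {n}.
Arguments DopM {n}.
Arguments apolar_Dop {n f h}.
Arguments DopC {n}.
Arguments deglex_irr {n}.
Arguments deglex_0 {n}.

Theorem lemma3p5 (n d w : nat) (hw : (0 < w)%N) (f : {mpoly CC[n]})
  (ms : 'I_w -> 'X_{1..n}) (A : 'I_n -> 'M[CC]_w) :
  f \is d.-homog ->
  pd_dim f w ->
  (* m_1 < m_2 < ... < m_w enumerate the normal set of f^perp *)
  (forall i j : 'I_w, (i < j)%N -> deglex_lt (ms i) (ms j)) ->
  (forall m, normal_set f m <-> exists i, ms i = m) ->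
  (* A_l(i,j) = coefficient of m_j in [t_l * m_i] *)
  (forall (l : 'I_n) (i : 'I_w), exists p,
      is_normal_form f ('X_l * 'X_[ms i]) p /\
      forall j, A l i j = p@_(ms j)) ->
  exists v : 'I_w -> CC,
    \sum_(j < w) v j *: Gmat d A (Ordinal hw) j = f.
Proof.
case: w hw ms A => // w hw ms A hom pd sorted nsP tabs.
have fN0 : f != 0.
  apply/eqP => f0; subst f; case: pd => b [bspan bind _].
  have b0 : forall i, b i = 0.
    move=> i; case: (bspan i) => r [rS ->]; rewrite big_seq big1 // => x /rS [e ->].
    by rewrite /pderiv_mon linear0 scaler0.
  have := bind (fun _ => 1) _ ord0.
  rewrite big1 => [/(_ erefl) /eqP|i _]; last by rewrite b0 scaler0.
  by rewrite oner_eq0.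
have n0 : normal_set f 0%MM.
  move=> [g [ag [g0 lead]]].
  have gC : g = (g@_0%MM)%:MP.
    apply/mpolyP => m; rewrite mcoeffC; case: (eqVneq m 0%MM) => [->|mn0]; first by rewrite mulr1.
    rewrite mulr0; apply/eqP; apply: contraT => gm.
    by have := lead m gm mn0; rewrite (negbTE (deglex_0 _)).
  have := apolar_Dop ag; rewrite gC DopC => /eqP; rewrite scaler_eq0 (negbTE g0) /=.
  by rewrite (negbTE fN0).
have ms_inj : injective ms.
  move=> i j eij; apply/val_inj/eqP; case: ltngtP => // hij.
    by have := sorted _ _ hij; rewrite eij (negbTE (deglex_irr _)).
  by have := sorted _ _ hij; rewrite eij (negbTE (deglex_irr _)).
have ms0 : ms (Ordinal hw) = 0%MM.
  case: (nsP 0%MM).1 => // i hi.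
  case: (eqVneq i (Ordinal hw)) => [<-//|ne].
  have : (Ordinal hw < i)%N by rewrite /= lt0n; apply: contra ne => /eqP h; apply/eqP/val_inj.
  by move/sorted; rewrite hi (negbTE (deglex_0 _)).
pose N j := 'X_[ms j] : {mpoly CC[n]}.
have decomp : forall p, (forall m, p@_m != 0 -> normal_set f m) ->
    p = \sum_j p@_(ms j) *: N j.
  move=> p pN; apply/mpolyP => m.
  rewrite raddf_sum /= (eq_bigr (fun j => p@_(ms j) * (ms j == m)%:R)); last first.
    by move=> j _; rewrite mcoeffZ mcoeffX.
  case: (eqVneq p@_m 0) => [pm0|pm].
    rewrite pm0 big1 // => j _; case: eqP => [->|_]; by rewrite ?pm0 ?mulr0 ?mul0r.
  case: ((nsP m).1 (pN m pm)) => i hi.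
  rewrite (bigD1 i) //= hi eqxx mulr1 big1 ?addr0 // => j ji.
  case: eqP => [ej|]; last by rewrite mulr0.
  by move: ji; rewrite (ms_inj j i) ?eqxx // hi.
pose P (M : 'M[CC]_w.+1) (h : {mpoly CC[n]}) :=
  forall i, Dop (h * N i) f = \sum_j M i j *: Dop (N j) f.
have P1 : P 1 1.
  move=> i; rewrite mul1r (bigD1 i) //= big1 ?addr0.
    by rewrite mxE eqxx scale1r.
  by move=> j ji; rewrite mxE eq_sym (negbTE ji) scale0r.
have PA : forall l, P (A l) 'X_l.
  move=> l i; case: (tabs l i) => p [[pN ap] pA].
  have := apolar_Dop ap; rewrite DopB => /eqP; rewrite subr_eq0 => /eqP ->.
  rewrite {1}(decomp p pN) Dop_sum.
under eq_bigr => j _ do rewrite DopZ -pA.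
  done.
have PM : forall M M' h h', P M h -> P M' h' -> P (M * M') (h * h').
  move=> M M' h h' PMh PMh' i.
  have -> : h * h' * N i = h' * (h * N i) by rewrite [h * h']mulrC -mulrA.
  rewrite DopM PMh Dop_sumr.
  under eq_bigr => j _ do rewrite DopZr -DopM PMh' scaler_sumr.
  rewrite exchange_big /=; apply: eq_bigr => k _.
  rewrite -mulmxE mxE scaler_suml; apply: eq_bigr => j _; by rewrite scalerA.
have PX : forall M h k, P M h -> P (M ^+ k) (h ^+ k).
  move=> M h k PMh; elim: k => [|k IH]; first by rewrite !expr0.
  by rewrite !exprS; apply: PM.
have Pbig : forall k : 'I_n -> nat, P (\prod_(i < n) A i ^+ k i) 'X_[[multinom k i | i < n]].
  move=> k; rewrite mpolyXE_id.
  have -> : \prod_(i<n) 'X_i ^+ [multinom k i | i < n] i = \prod_(i < n) 'X_i ^+ k i :> {mpoly CC[n]}.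
    by apply: eq_bigr => i _; rewrite mnmE.
  apply: (big_rec2 (fun M h => P M h)) => // i M h _ Ph.
  by apply: PM => //; apply: PX; apply: PA.
exists (fun j => (Dop (N j) f)@_0%MM).
have GE : Gmat d A = \sum_(g : {ffun 'I_n -> 'I_d.+1})
   (\prod_(i < n) ((g i)`!%:R^-1 *: 'X_i ^+ g i)) *:
     map_mx (fun c : CC => c%:MP_[n]) (\prod_(i < n) A i ^+ g i).
  rewrite /Gmat bigA_distr_bigA; apply: eq_bigr => g _.
  by rewrite scaler_prod rmorph_prod.
have GE0 : forall j, Gmat d A (Ordinal hw) j = \sum_(g : {ffun 'I_n -> 'I_d.+1})
   (\prod_(i < n) ((g i)`!%:R^-1 *: 'X_i ^+ g i)) *
     ((\prod_(i < n) A i ^+ g i) (Ordinal hw) j)%:MP_[n].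
  by move=> j; rewrite GE summxE; apply: eq_bigr => g _; rewrite !mxE.
under eq_bigr => j _ do rewrite GE0 scaler_sumr.
rewrite exchange_big /=.
rewrite (eq_bigr (fun g : {ffun 'I_n -> 'I_d.+1} =>
   f@_[multinom (g i : nat) | i < n] *: 'X_[[multinom (g i : nat) | i < n]])); last first.
  move=> g _.
  set m := [multinom (g i : nat) | i < n].
  have e : \sum_(j < w.+1) (Dop (N j) f)@_0%MM * (\prod_(i < n) A i ^+ g i) (Ordinal hw) j
           = f@_m *+ (\prod_(i < n) (g i)`!).
    have := congr1 (mcoeff 0%MM) (Pbig (fun i => g i) (Ordinal hw)).
    rewrite /N ms0 mpolyX0 mulr1 DopX mcoeff_mderivm addm0 raddf_sum /=.
    rewrite (eq_bigr (fun i => (g i)`!)) => [->|i _]; last by rewrite mnmE ffactnn.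
    by apply: eq_bigr => j _; rewrite mcoeffZ mulrC.
  under eq_bigr => j _ do rewrite scalerAr -mul_mpolyC -rmorphM.
  rewrite -mulr_sumr -rmorph_sum e scaler_prod.
  have -> : \prod_(i<n) 'X_i ^+ g i = 'X_[m] :> {mpoly CC[n]}.
    by rewrite mpolyXE_id; apply: eq_bigr => i _; rewrite mnmE.
  rewrite mulrC mul_mpolyC scalerA; congr (_ *: _).
  rewrite -mulr_natr -mulrA natr_prod -big_split /= big1 ?mulr1 // => i _.
  by rewrite mulfV // Num.Theory.pnatr_eq0 -lt0n fact_gt0.
apply/mpolyP => m.
rewrite raddf_sum /=.
under eq_bigr => g _ do rewrite mcoeffZ mcoeffX.
case: (eqVneq f@_m 0) => [fm0|fm].
  rewrite fm0 big1 // => g _; case: eqP => [->|_]; by rewrite ?fm0 ?mulr0 ?mul0r.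
have mdm : mdeg m = d by apply: (dhomog_mf hom); rewrite mcoeff_msupp.
have mle : forall i, (m i <= d)%N.
  move=> i; rewrite -mdm mdegE (bigD1 i) //=; exact: leq_addr.
pose g0 : {ffun 'I_n -> 'I_d.+1} := [ffun i => Ordinal (mle i : (m i < d.+1)%N)].
rewrite (bigD1 g0) //= big1 ?addr0.
  have -> : [multinom (g0 i : nat) | i < n] = m by apply/mnmP => i; rewrite mnmE ffunE.
  by rewrite eqxx mulr1.
move=> g ng; case: eqP => [e|]; last by rewrite mulr0.
exfalso; move/eqP: ng; apply; apply/ffunP => i; apply/val_inj; rewrite ffunE /= -e mnmE.
done.
Qed.
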